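(* Consider the following water-filling process. Set $\pi^1=0\in\mathbb{R}^N$ and $W^1_a=W$. While $W^t_a\neq\emptyset$: let $$\Delta\pi^t=\min_{S\subseteq N,\ W^t_a\not\subseteq S}\ \frac{w(N)-w(S)-\sum_{i\in N\setminus S}\pi^t_i}{|W^t_a\setminus S|},$$ let $S^*$ be any coalition attaining this minimum, set $W^t_f=W^t_a\setminus S^*$, define $\pi^{t+1}_i=\pi^t_i+\Delta\pi^t$ for $i\in W^t_a$ and $\pi^{t+1}_i=\pi^t_i$ otherwise, set $W^{t+1}_a=W^t_a\setminus W^t_f$, and increase $t$ by one. Then this process terminates after at most $|W|$ iterations, and the final vector $\pi^T$ (where $W^T_a=\emptyset$) is the BLO outcome.
   Context: A combinatorial auction (CA) has a finite set of bidders $N=\{1,\dots,n\}$, a finite set of items $M$, and for each bidder $i$ a valuation $v_i:2^M\to\mathbb{R}_{\ge 0}$ with $v_i(\emptyset)=0$. For $S\subseteq N$ let $w(S)=\max\{\sum_{i\in S}v_i(a_i): a_i\subseteq M,\ a_i\cap a_j=\emptyset\ (i\ne j)\}$ (with $w(\emptyset)=0$). Fix an allocation $(a^*_i)_{i\in N}$ attaining $w(N)$; the winner set is $W=\{i: a^*_i\neq\emptyset\}$. The core is $U=\{\pi\in\mathbb{R}^N:\ \pi_i\ge 0\ \forall i\in N,\ \sum_{i\in N\setminus S}\pi_i\le w(N)-w(S)\ \forall S\subseteq N\}$. (Equivalently, $\Delta\pi^t$ above is the largest $\Delta$ such that increasing the utility of every bidder in $W^t_a$ by $\Delta$, keeping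 the others fixed, stays in $U$.) For $x,y\in\mathbb{R}^n$, $x$ leximin-dominates $y$ if, writing $x_{(1)}\le\dots\le x_{(n)}$ and $y_{(1)}\le\dots\le y_{(n)}$ for the sorted entries, there is $0\le k\le n-1$ with $x_{(j)}=y_{(j)}$ for $j\le k$ and $x_{(k+1)}>y_{(k+1)}$. The BLO outcome is the (unique) $\pi\in U$ not leximin-dominated by any $\pi'\in U$. *)

(* Defs.v *)
From mathcomp Require Import all_boot all_order all_algebra.
Set Implicit Arguments. Unset Strict Implicit. Unset Printing Implicit Defensive.
Import Order.TTheory GRing.Theory Num.Theory.
Local Open Scope ring_scope.

Section CA.
Variables (R : realFieldType) (n : nat) (M : finType).
Variable v : 'I_n -> {set M} -> R.

Definition feasible (a : {ffun 'I_n -> {set M}}) : bool :=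
  [forall i, forall j, (i != j) ==> [disjoint a i & a j]].

(* w(S) = max over feasible allocations of the welfare of S (values are
   nonnegative and the empty allocation is feasible, so seeding with 0 is harmless) *)
Definition welfare (S : {set 'I_n}) : R :=
  \big[Num.max/0]_(a : {ffun 'I_n -> {set M}} | feasible a) \sum_(i in S) v i (a i).

Definition in_core (p : {ffun 'I_n -> R}) : Prop :=
  (forall i, 0 <= p i) /\
  (forall S : {set 'I_n}, \sum_(i in ~: S) p i <= welfare setT - welfare S).

Definition sorted_entries (x : {ffun 'I_n -> R}) : seq R :=
  sort <=%R (fgraph x).

Definition leximin_dom (x y : {ffun 'I_n -> R}) : Prop :=
  exists k : nat, (k < n)%N /\
    (forall j, (j < k)%N -> nth 0 (sorted_entries x) j = nth 0 (sorted_entries y) j) /\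
    nth 0 (sorted_entries y) k < nth 0 (sorted_entries x) k.

Definition is_BLO (p : {ffun 'I_n -> R}) : Prop :=
  in_core p /\ forall p', in_core p' -> ~ leximin_dom p' p.

Definition wf_ratio (p : {ffun 'I_n -> R}) (A S : {set 'I_n}) : R :=
  (welfare setT - welfare S - \sum_(i in ~: S) p i) / (#|A :\: S|)%:R.

Definition wf_step (p : {ffun 'I_n -> R}) (A : {set 'I_n})
    (p' : {ffun 'I_n -> R}) (A' : {set 'I_n}) : Prop :=
  exists Sstar : {set 'I_n},
    ~~ (A \subset Sstar) /\
    (forall S : {set 'I_n}, ~~ (A \subset S) -> wf_ratio p A Sstar <= wf_ratio p A S) /\
    let Delta := wf_ratio p A Sstar in
    let Wf := A :\: Sstar in
    (forall i, p' i = if i \in A then p i + Delta else p i) /\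
    A' = A :\: Wf.

(* a run of the process: state at time t (0-indexed, t = 0 is the paper's t = 1) *)
Definition wf_run (W : {set 'I_n}) (pi : nat -> {ffun 'I_n -> R})
    (Wa : nat -> {set 'I_n}) : Prop :=
  pi 0%N = [ffun => 0] /\ Wa 0%N = W /\
  forall t, Wa t != set0 -> wf_step (pi t) (Wa t) (pi t.+1) (Wa t.+1).

End CA.

(* Main.v *)
Require Import Defs.
From mathcomp Require Import all_boot all_order all_algebra zify.
Import Order.TTheory GRing.Theory Num.Theory.
Set Implicit Arguments. Unset Strict Implicit. Unset Printing Implicit Defensive.
Local Open Scope ring_scope.

Definition cnt (R : realFieldType) (n : nat) (p : {ffun 'I_n -> R}) (z : R) : nat :=
  count (fun a => a <= z) (sorted_entries p).

Lemma cntE (R : realFieldType) (n : nat) (p : {ffun 'I_n -> R}) (z : R) :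
  cnt p z = count (fun i => p i <= z) (enum 'I_n).
Proof.
rewrite /cnt /sorted_entries ((permP (permEl (perm_sort _ _))) (fun a => a <= z)).
by rewrite -codom_ffun codomE count_map.
Qed.

Lemma size_se (R : realFieldType) (n : nat) (p : {ffun 'I_n -> R}) :
  size (sorted_entries p) = n.
Proof. by rewrite /sorted_entries size_sort size_tuple card_ord. Qed.

Lemma sorted_se (R : realFieldType) (n : nat) (p : {ffun 'I_n -> R}) :
  sorted <=%O (sorted_entries p).
Proof. exact: sort_le_sorted. Qed.

Lemma dom_cnt (R : realFieldType) (n : nat) (x y : {ffun 'I_n -> R}) :
  leximin_dom y x -> exists c0, (cnt y c0 < cnt x c0)%N /\
     forall z, z < c0 -> (cnt y z <= cnt x z)%N.
Proof.
move=> [k [hk [heq hlt]]].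
set s := sorted_entries x in heq hlt *; set s' := sorted_entries y in heq hlt *.
have ss : sorted <=%O s by exact: sorted_se.
have ss' : sorted <=%O s' by exact: sorted_se.
have zs : size s = n by exact: size_se.
have zs' : size s' = n by exact: size_se.
exists (nth 0 s k); split.
  rewrite /cnt -/s -/s'.
  have h1 : (count (fun a : R => (a <= nth 0 s k)%R) s' <= k)%N.
    rewrite leqNgt; apply/negP => /(nth_count_le 0 ss') h.
    by move: (lt_le_trans hlt h); rewrite ltxx.
  have h2 : (k < count (fun a : R => (a <= nth 0 s k)%R) s)%N.
    rewrite ltnNge; apply/negP => h.
    have := nth_count_gt 0 ss (i := k) (x := nth 0 s k).
    by rewrite h zs hk ltxx => /(_ isT).
  exact: leq_ltn_trans h1 h2.
move=> z hz; rewrite /cnt -/s -/s'.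
set m := count _ s; set m' := count _ s'.
rewrite leqNgt; apply/negP => hmm.
have hmk : (m < k)%N.
  rewrite ltnNge; apply/negP => hkm.
  have hk' : (k < m')%N by exact: leq_ltn_trans hkm hmm.
  have := nth_count_le 0 ss' hk'.
  have := lt_trans hz hlt.
  by move=> a b; move: (lt_le_trans a b); rewrite ltxx.
have a := nth_count_le 0 ss' hmm.
have b := nth_count_gt 0 ss (i := m) (x := z).
rewrite leqnn zs (ltn_trans hmk hk) /= in b.
rewrite (heq _ hmk) in a.
by move: (lt_le_trans (b isT) a); rewrite ltxx.
Qed.

Lemma count_lt (T : eqType) (a b : pred T) (s : seq T) :
  (forall x, a x -> b x) -> (exists2 x, x \in s & b x && ~~ a x) ->
  (count a s < count b s)%N.
Proof.
move=> hab [x]; elim: s => // y s IH; rewrite inE => /orP [/eqP -> | xs] hx /=.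
  case/andP: hx => -> /negbTE ->; rewrite add0n add1n ltnS.
  exact: sub_count.
have := IH xs hx.
by case: (a y) (b y) (hab y) => [] [] //= h; lia.
Qed.

Lemma nodom (R : realFieldType) (n : nat) (x y : {ffun 'I_n -> R}) :
  (forall i, x i < y i -> exists j, x j <= x i /\ y j < x j) -> ~ leximin_dom y x.
Proof.
move=> H /dom_cnt [c0 [Hc0 Hz]].
case: (boolP [exists j, y j < x j]) => [/existsP [j1 Hj1] | /existsPn Hno]; last first.
  have eyx : y = x.
    apply/ffunP => i; have := Hno i; case: ltgtP => // h _.
    by have [j [_ hj]] := H i h; move: (Hno j); rewrite hj.
  by move: Hc0; rewrite eyx ltnn.
case: (@arg_minP _ _ _ j1 (fun j => y j < x j) (fun j => x j) Hj1) => j0 Hj0 Hmin.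
have D : forall i, y i != x i -> x j0 <= x i.
  move=> i hi; case: (ltgtP (y i) (x i)) => [h|h|h]; last by rewrite h eqxx in hi.
    exact: Hmin.
  have [j [hj1 hj2]] := H i h.
  exact: le_trans (Hmin _ hj2) hj1.
have sub : forall z, z < x j0 -> forall i, x i <= z -> y i <= z.
  move=> z hz i hi; case: (eqVneq (y i) (x i)) => [-> //|/D h].
  by move: (le_lt_trans (le_trans h hi) hz); rewrite ltxx.
have mono : forall z, z < x j0 -> (cnt x z <= cnt y z)%N.
  by move=> z hz; rewrite !cntE; apply: sub_count => i /=; exact: sub.
have strict : (cnt x (y j0) < cnt y (y j0))%N.
  rewrite !cntE; apply: count_lt => [i|]; first exact: sub.
  by exists j0; rewrite ?mem_enum // lexx /= -ltNge.
case: (ltP c0 (x j0)) => hc.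
  by move: (leq_ltn_trans (mono _ hc) Hc0); rewrite ltnn.
have := Hz (y j0) (lt_le_trans Hj0 hc).
by move=> h; move: (leq_ltn_trans h strict); rewrite ltnn.
Qed.

Lemma sum_step (R : realFieldType) (n : nat) (p p' : {ffun 'I_n -> R}) (A S : {set 'I_n}) (D : R) :
  (forall i, p' i = if i \in A then p i + D else p i) ->
  \sum_(i in ~: S) p' i = \sum_(i in ~: S) p i + #|A :\: S|%:R * D.
Proof.
move=> hp.
rewrite (eq_bigr (fun i => p i + (if i \in A then D else 0))); last first.
  by move=> i _; rewrite hp; case: (i \in A); rewrite ?addr0.
rewrite big_split /=; congr (_ + _).
rewrite -big_mkcondr /= (eq_bigl (fun i => i \in A :\: S)); last first.
  by move=> i; rewrite !inE andbC.
by rewrite sumr_const mulr_natl.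
Qed.

Lemma welfare_ge0 (R : realFieldType) (n : nat) (M : finType) (v : 'I_n -> {set M} -> R)
  (v_nonneg : forall i A, 0 <= v i A) (S : {set 'I_n}) : 0 <= welfare v S.
Proof.
rewrite /welfare; apply: (big_ind (fun y => 0 <= y)) => //.
  by move=> a b ha hb; rewrite le_max ha.
by move=> a _; apply: sumr_ge0 => i _.
Qed.

Lemma welfare_le (R : realFieldType) (n : nat) (M : finType) (v : 'I_n -> {set M} -> R)
  (v_nonneg : forall i A, 0 <= v i A) (S : {set 'I_n}) : welfare v S <= welfare v setT.
Proof.
rewrite {1}/welfare; apply: bigmax_le; first exact: welfare_ge0.
move=> a fa; have hb := le_bigmax_cond 0 (fun a : {ffun 'I_n -> {set M}} => \sum_(i in setT) v i (a i)) fa.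
rewrite /welfare; apply: le_trans hb.
rewrite big_mkcond /= [X in _ <= X]big_mkcond /=; apply: ler_sum => i _.
by rewrite in_setT; case: (i \in S).
Qed.

Lemma loser_le0 (R : realFieldType) (n : nat) (M : finType) (v : 'I_n -> {set M} -> R)
    (v_empty : forall i, v i set0 = 0)
    (astar : {ffun 'I_n -> {set M}})
    (astar_feas : feasible astar)
    (astar_opt : \sum_(i in [set: 'I_n]) v i (astar i) = welfare v [set: 'I_n])
    (p : {ffun 'I_n -> R}) (hp : in_core v p) (i : 'I_n) :
  astar i = set0 -> p i <= 0.
Proof.
move=> hi; case: hp => _ /(_ (setT :\ i)).
have -> : ~: (setT :\ i) = [set i].
  by apply/setP => j; rewrite !inE andbT negbK.
rewrite big_set1 => h; apply: le_trans h _.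
rewrite subr_le0 -astar_opt (bigD1 i) ?in_setT //= hi v_empty add0r.
rewrite (eq_bigl (fun j => j \in setT :\ i)); last by move=> j; rewrite !inE andbT.
rewrite /welfare; exact: (le_bigmax_cond _ (fun a : {ffun 'I_n -> {set M}} => \sum_(j in setT :\ i) v j (a j)) astar_feas).
Qed.

Definition Inv (R : realFieldType) (n : nat) (M : finType) (v : 'I_n -> {set M} -> R)
  (W : {set 'I_n}) (p : {ffun 'I_n -> R}) (A : {set 'I_n}) : Prop :=
  [/\ A \subset W,
      in_core v p,
      (exists L, (forall i, i \in A -> p i = L) /\ (forall j, j \notin A -> p j <= L)) &
      (forall i, i \notin A -> (i \notin W /\ p i = 0) \/
         exists S : {set 'I_n}, [/\ i \notin S, A \subset S,
            \sum_(j in ~: S) p j = welfare v setT - welfare v S &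
            forall j, j \notin S -> p j <= p i])].

Lemma step_inv (R : realFieldType) (n : nat) (M : finType) (v : 'I_n -> {set M} -> R)
  (W : {set 'I_n}) (p p' : {ffun 'I_n -> R}) (A A' : {set 'I_n}) :
  wf_step v p A p' A' -> Inv v W p A -> Inv v W p' A' /\ A' \proper A.
Proof.
move=> [Ss [hns [hmin [hp' hA']]]] [hAW [hnn hcore] [L [hL1 hL2]] hfr].
set D := wf_ratio v p A Ss in hp'.
have {}hp' : forall i : 'I_n, p' i = if i \in A then p i + D else p i := hp'.
have memA' : forall i, (i \in A') = (i \in A) && (i \in Ss).
  by move=> i; rewrite hA' !inE; case: (i \in A); case: (i \in Ss).
have dpos : (0 < #|A :\: Ss|)%N by rewrite card_gt0 setD_eq0.
have dposR : 0 < (#|A :\: Ss|)%:R :> R by rewrite ltr0n.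
have D0 : 0 <= D.
  rewrite /D /wf_ratio divr_ge0 ?ler0n // subr_ge0; exact: hcore.
have keyS : (#|A :\: Ss|)%:R * D = welfare v setT - welfare v Ss - \sum_(i in ~: Ss) p i.
  by rewrite /D /wf_ratio mulrC divfK // gt_eqF.
have unch : forall S : {set 'I_n}, A \subset S -> \sum_(i in ~: S) p' i = \sum_(i in ~: S) p i.
  move=> S hAS; apply: eq_bigr => i; rewrite inE => hi.
  rewrite hp'; case: ifP => // hiA.
  by move: (subsetP hAS i hiA); rewrite (negbTE hi).
have A'sub : A' \subset A by apply/subsetP => i; rewrite memA' => /andP [].
split; last first.
  apply/properP; split => //.
  have : ~~ (A :\: Ss == set0) by rewrite setD_eq0.
  case/set0Pn => i; rewrite inE => /andP [hi1 hi2].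
  by exists i => //; rewrite memA' (negbTE hi1) andbF.
split.
- exact: subset_trans A'sub hAW.
- split.
    by move=> i; rewrite hp'; case: ifP => _; rewrite ?addr_ge0.
  move=> S; case: (boolP (A \subset S)) => hAS.
    by rewrite unch //; exact: hcore.
  rewrite (sum_step _ hp') -lerBrDl.
  have := hmin S hAS; rewrite /wf_ratio -/D ler_pdivlMr; last first.
    by rewrite ltr0n card_gt0 setD_eq0.
  by rewrite mulrC.
- exists (L + D); split.
    move=> i; rewrite memA' => /andP [hiA _]; by rewrite hp' ifT ?hL1.
  move=> j _; rewrite hp'; case: ifP => hjA; first by rewrite hL1.
  by apply: le_trans (hL2 j (negbT hjA)) _; rewrite lerDl.
- move=> i hi; case: (boolP (i \in A)) => hiA.
    right; exists Ss; split.
    + by move: hi; rewrite memA' hiA.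
    + by apply/subsetP => j; rewrite memA' => /andP [].
    + by rewrite (sum_step _ hp') keyS addrC subrK.
    + move=> j _; rewrite [p' i]hp' ifT ?hL1 // hp'; case: ifP => hjA; first by rewrite hL1.
      by apply: le_trans (hL2 j (negbT hjA)) _; rewrite lerDl.
  have pi_eq : p' i = p i by rewrite hp' ifF //; apply/negbTE.
  case: (hfr i hiA) => [[h1 h2]|[S [h1 h2 h3 h4]]].
    by left; rewrite pi_eq.
  right; exists S; split => //.
  + exact: subset_trans A'sub h2.
  + by rewrite unch.
  + move=> j hj; rewrite pi_eq hp'; case: ifP => hjA; last exact: h4.
    by move: (subsetP h2 j hjA); rewrite (negbTE hj).
Qed.

Theorem lemma2 (R : realFieldType) (n : nat) (M : finType)
    (v : 'I_n -> {set M} -> R)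
    (v_nonneg : forall i A, 0 <= v i A)
    (v_empty : forall i, v i set0 = 0)
    (astar : {ffun 'I_n -> {set M}})
    (astar_feas : feasible astar)
    (astar_opt : \sum_(i in [set: 'I_n]) v i (astar i) = welfare v [set: 'I_n])
    (pi : nat -> {ffun 'I_n -> R}) (Wa : nat -> {set 'I_n})
    (run : wf_run v [set i | astar i != set0] pi Wa) :
  exists T : nat,
    (T <= #|[set i | astar i != set0]|)%N /\
    Wa T = set0 /\
    (forall t, (t < T)%N -> Wa t != set0) /\
    is_BLO v (pi T).
Proof.
set W := [set i | astar i != set0] in run *.
case: run => [h0 [hW0 hstep]].
have init : Inv v W (pi 0%N) (Wa 0%N).
  rewrite h0 hW0; split => //.
  - split => [i|S]; first by rewrite ffunE.
    rewrite big1 => [|i _]; last by rewrite ffunE.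
    by rewrite subr_ge0; apply: welfare_le.
  - by exists 0; split => [i _|j _]; rewrite ffunE.
  - by move=> i hi; left; rewrite ffunE.
have inv : forall t, (forall s, (s < t)%N -> Wa s != set0) ->
    Inv v W (pi t) (Wa t) /\ (#|Wa t| + t <= #|W|)%N.
  elim => [_|t IH hne]; first by split; [exact: init | rewrite hW0 addn0].
  have [hI hc] := IH (fun s hs => hne s (ltnW hs)).
  have [hI' hpr] := step_inv (hstep t (hne t (ltnSn t))) hI.
  split => //; have := proper_card hpr; lia.
have hex : exists t, Wa t == set0.
  case: (boolP [exists t : 'I_(#|W|.+1), Wa t == set0]) => [/existsP [t ht]|/existsPn hno].
    by exists t.
  have := inv #|W| (fun s hs => hno (@Ordinal #|W|.+1 s (ltnW hs))).
  case=> [_ hc]; have hn := hno (@Ordinal #|W|.+1 #|W| (ltnSn _)); simpl in hn.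
  have e : (#|Wa #|W| | == 0)%N by rewrite -leqn0 -(leq_add2r #|W|) add0n.
  by exfalso; case/negP: hn; rewrite -cards_eq0; exact: e.
case: (ex_minnP hex) => T /eqP hT hmin.
have hlt : forall t, (t < T)%N -> Wa t != set0.
  by move=> t ht; apply/negP => /hmin; rewrite leqNgt ht.
have [[hAW hcore hL hfr] hc] := inv T hlt.
exists T; split; first lia.
split => //; split => //; split => // p' hp'.
apply: nodom => i hi.
have := hfr i; rewrite hT inE => /(_ isT) [[hl h0i]|[S [hiS _ hS hle]]].
  move: hl; rewrite inE negbK => /eqP hl.
  have := loser_le0 v_empty astar_feas astar_opt hp' hl.
  by rewrite h0i in hi => /(lt_le_trans hi); rewrite ltxx.
case: (boolP [exists j in ~: S, p' j < pi T j]) => [/existsP [j /andP [hjS hj]]|/exists_inPn hno].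
  by exists j; split => //; apply: hle; rewrite inE in hjS.
exfalso.
have : \sum_(j in ~: S) pi T j < \sum_(j in ~: S) p' j.
  have hiS' : i \in ~: S by rewrite inE.
  rewrite (bigD1 i hiS') [X in _ < X](bigD1 i hiS') /=.
  apply: ltr_leD => //; apply: ler_sum => j /andP [hj _].
  by rewrite leNgt; apply: hno.
case: hp' => _ /(_ S); rewrite -hS => h1 h2.
by move: (lt_le_trans h2 h1); rewrite ltxx.
Qed.
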